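(* Let $\mathbf{C}\in\mathbb{R}^{n\times n}$ (discrete curl), $\tilde{\mathbf{S}}\in\mathbb{R}^{m\times n}$ (discrete divergence, $-\tilde{\mathbf{S}}^\top$ discrete gradient), $\mathbf{M}_\mu\in\mathbb{R}^{n\times n}$ symmetric positive definite, $\mathbf{M}_\rho\in\mathbb{R}^{n\times n}$, $\mathbf{P}\in\mathbb{R}^{n\times k}$ (reduced cotree projection of a tree-cotree gauge) and $\mathbf{Y}_\mathrm{s}\in\mathbb{R}^{n\times n_\mathrm{s}}$ (discrete winding function) satisfy: $\ker\tilde{\mathbf{S}}^\top=\{\mathbf{0}\}$; $\mathbf{C}\tilde{\mathbf{S}}^\top=\mathbf{0}$ and $\ker\tilde{\mathbf{S}}=\mathrm{im}\,\mathbf{C}^\top$; $\mathbf{K}_\rho=\mathbf{P}^\top\mathbf{C}^\top\mathbf{M}_\rho\mathbf{C}\mathbf{P}$ is nonsingular; and for all $\mathbf{x}\in\mathbb{R}^{n_\mathrm{s}}\setminus\{\mathbf{0}\}$, $\mathbf{y}\in\mathbb{R}^{k}\setminus\{\mathbf{0}\}$: $\mathbf{C}\mathbf{Y}_\mathrm{s}\mathbf{x}\neq\mathbf{0}$ and $\mathbf{C}\mathbf{Y}_\mathrm{s}\mathbf{x}\neq\mathbf{C}\mathbf{P}\mathbf{y}$. Then the gauged, spatially discretised T-$\Omega$ system with circuit coupling \begin{align*} \mathbf{K}_\rho\mathbf{t}_\mathrm{red}+\mathbf{P}^\top\mathbf{M}_\mu\big(\mathbf{P}\tfrac{\mathrm{d}}{\mathrm{d}t}\mathbf{t}_\mathrm{red}+\tilde{\mathbf{S}}^\top\tfrac{\mathrm{d}}{\mathrm{d}t}\Psi+\mathbf{Y}_\mathrm{s}\tfrac{\mathrm{d}}{\mathrm{d}t}\mathbf{i}_\mathrm{s}\big)&=0,\\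 \tilde{\mathbf{S}}\mathbf{M}_\mu\big(\mathbf{P}\mathbf{t}_\mathrm{red}+\tilde{\mathbf{S}}^\top\Psi+\mathbf{Y}_\mathrm{s}\mathbf{i}_\mathrm{s}\big)&=0,\\ \mathbf{Y}_\mathrm{s}^\top\mathbf{M}_\mu\big(\mathbf{P}\tfrac{\mathrm{d}}{\mathrm{d}t}\mathbf{t}_\mathrm{red}+\tilde{\mathbf{S}}^\top\tfrac{\mathrm{d}}{\mathrm{d}t}\Psi+\mathbf{Y}_\mathrm{s}\tfrac{\mathrm{d}}{\mathrm{d}t}\mathbf{i}_\mathrm{s}\big)-\mathbf{v}_\mathrm{s}&=0, \end{align*} with unknowns $\mathbf{x}_\lambda=(\mathbf{t}_\mathrm{red},\Psi)$, current $\mathbf{i}_\lambda=\mathbf{i}_\mathrm{s}$ and voltage $\mathbf{v}_\lambda=\mathbf{v}_\mathrm{s}$, is an inductance-like element.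
   Context: Positive definite means $\mathbf{x}^\top\mathbf{M}\mathbf{x}>0$ for $\mathbf{x}\ne0$. Inductance-like element: a device described by a DAE $\mathbf{F}(\frac{\mathrm{d}}{\mathrm{d}t}\mathbf{x}_\lambda,\frac{\mathrm{d}}{\mathrm{d}t}\mathbf{i}_\lambda,\mathbf{x}_\lambda,\mathbf{i}_\lambda,\mathbf{v}_\lambda,t)=0$ with $\mathbf{x}_\lambda:\mathcal{I}\to\mathbb{R}^{n_\mathrm{dof}}$, $\mathbf{i}_\lambda,\mathbf{v}_\lambda:\mathcal{I}\to\mathbb{R}^{n_\lambda}$, such that at most one differentiation $\frac{\mathrm{d}}{\mathrm{d}t}\mathbf{F}=0$ is needed to obtain from $\mathbf{F}=0$ and $\frac{\mathrm{d}}{\mathrm{d}t}\mathbf{F}=0$ (by algebraic manipulations) a system $\frac{\mathrm{d}}{\mathrm{d}t}\mathbf{x}_\lambda=\mathbf{f}_\mathbf{x}(\mathbf{x}_\lambda,\mathbf{i}_\lambda,\mathbf{v}_\lambda,t)$, $\frac{\mathrm{d}}{\mathrm{d}t}\phi(\mathbf{i}_\lambda,\mathbf{x}_\lambda,t)=\mathbf{f}_\phi(\mathbf{x}_\lambda,\mathbf{i}_\lambda,\mathbf{v}_\lambda,t)$, where $\partial\phi/\partial\mathbf{i}_\lambda$ is regular and $\frac{\partial}{\partial\mathbf{v}_\lambda}\Big((\frac{\partial\phi}{\partial\mathbf{i}_\lambda})^{-1}(-\frac{\partial\phi}{\partial\mathbf{x}_\lambda}\mathbf{f}_\mathbf{x}-\frac{\partial\phi}{\partial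 t}+\mathbf{f}_\phi)\Big)$ is positive definite. Here $\mathbf{t}_\mathrm{red}$ are the gauged degrees of freedom of the electric vector potential in the conducting region, $\Psi$ those of the magnetic scalar potential, $\mathbf{i}_\mathrm{s},\mathbf{v}_\mathrm{s}$ the coil currents and voltages. *)

(* Defs.v *)
From HB Require Import structures.
From mathcomp Require Import all_boot all_order all_algebra.
From mathcomp Require Import all_classical all_reals all_analysis.
Set Implicit Arguments. Unset Strict Implicit. Unset Printing Implicit Defensive.
Import Order.TTheory GRing.Theory Num.Theory.
Import numFieldNormedType.Exports.
Local Open Scope classical_set_scope.
Local Open Scope ring_scope.

(* Vectors are represented as row vectors 'rV_n (so that Frechet
   differentials 'd and their matrices lin1_mx can be used); the
   matrix of a linear map f on row vectors in the usual column
   convention is (lin1_mx f)^T. *)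

Section Defs.
Variable R : realType.

Definition posdefmx n (A : 'M[R]_n) : Prop :=
  forall x : 'cV[R]_n, x != 0 -> 0 < (x^T *m A *m x) 0 0.

(* A DAE F(d/dt x, d/dt i, x, i, v, t) = 0 with
   x : R^nd, i,v : R^nl, and ne scalar equations. *)
Definition dae_fun (nd nl ne : nat) :=
  'rV[R]_nd -> 'rV[R]_nl -> 'rV[R]_nd -> 'rV[R]_nl -> 'rV[R]_nl -> R -> 'rV[R]_ne.

Definition dphi_di nd nl (phi : 'rV[R]_nl -> 'rV[R]_nd -> R -> 'rV[R]_nl) i x t :=
  'd (fun j => phi j x t) i.
Definition dphi_dx nd nl (phi : 'rV[R]_nl -> 'rV[R]_nd -> R -> 'rV[R]_nl) i x t :=
  'd (fun y => phi i y t) x.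
Definition dphi_dt nd nl (phi : 'rV[R]_nl -> 'rV[R]_nd -> R -> 'rV[R]_nl) i x t :=
  'D_1 (fun s => phi i x s) t.

(* Inductance-like element on the time set I.
   "From F = 0 and d/dt F = 0 (one differentiation) one obtains by algebraic
   manipulations" is read as: at every point of the first/second order jet
   (x, i, v, t; x', i', v'; x'', i'') at which F = 0 and the total time
   derivative of F along the jet vanishes, the equations
     x' = f_x(x,i,v,t),   d/dt phi(i,x,t) = f_phi(x,i,v,t)
   hold, where d/dt phi(i,x,t) = dphi/di i' + dphi/dx x' + dphi/dt. *)
Definition inductance_like (nd nl ne : nat) (I : set R) (F : dae_fun nd nl ne) : Prop :=
  exists (fx : 'rV[R]_nd -> 'rV[R]_nl -> 'rV[R]_nl -> R -> 'rV[R]_nd)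
         (phi : 'rV[R]_nl -> 'rV[R]_nd -> R -> 'rV[R]_nl)
         (fphi : 'rV[R]_nd -> 'rV[R]_nl -> 'rV[R]_nl -> R -> 'rV[R]_nl),
  [/\
      (forall i x t, I t ->
         [/\ differentiable (fun j => phi j x t) i,
             differentiable (fun y => phi i y t) x &
             derivable (fun s => phi i x s) t 1]),
      (forall (x dx ddx : 'rV[R]_nd) (i v di dv ddi : 'rV[R]_nl) (t : R), I t ->
         F dx di x i v t = 0 ->
         is_derive (0 : R) (1 : R)
           (fun h : R => F (dx + h *: ddx) (di + h *: ddi) (x + h *: dx)
                           (i + h *: di) (v + h *: dv) (t + h)) 0 ->
         dx = fx x i v t /\
         dphi_di phi i x t di + dphi_dx phi i x t dx + dphi_dt phi i x t
           = fphi x i v t) &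
      (forall (x : 'rV[R]_nd) (i v : 'rV[R]_nl) (t : R), I t ->
         let J := (lin1_mx (dphi_di phi i x t))^T in
         let G := fun w : 'rV[R]_nl =>
           ((invmx J) *m (- (dphi_dx phi i x t (fx x i w t))^T
                          - (dphi_dt phi i x t)^T + (fphi x i w t)^T))^T in
         [/\ J \in unitmx, differentiable G v &
             posdefmx (lin1_mx ('d G v))^T])].

Definition TOmega_F n m k ns (C : 'M[R]_n) (St : 'M[R]_(m, n))
  (Mmu Mrho : 'M[R]_n) (P : 'M[R]_(n, k)) (Ys : 'M[R]_(n, ns))
  : dae_fun (k + m) ns (k + m + ns) :=
  fun dx di x i v _ =>
    let t := (lsubmx x)^T in let Psi := (rsubmx x)^T in
    let dt := (lsubmx dx)^T in let dPsi := (rsubmx dx)^T in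
    let Krho := P^T *m C^T *m Mrho *m C *m P in
    let e1 := Krho *m t + P^T *m Mmu *m (P *m dt + St^T *m dPsi + Ys *m di^T) in
    let e2 := St *m Mmu *m (P *m t + St^T *m Psi + Ys *m i^T) in
    let e3 := Ys^T *m Mmu *m (P *m dt + St^T *m dPsi + Ys *m di^T) - v^T in
    row_mx (row_mx e1^T e2^T) e3^T.

End Defs.

(* Main.v *)
Require Import Defs.
From HB Require Import structures.
From mathcomp Require Import all_boot all_order all_algebra.
From mathcomp Require Import all_classical all_reals all_analysis.
From mathcomp Require Import ring.
Import Order.TTheory GRing.Theory Num.Theory.
Import numFieldNormedType.Exports.
Local Open Scope classical_set_scope.
Local Open Scope ring_scope.
Lemma aff_derive (R : realType) (V : normedModType R) (c d df : V) :
  is_derive (0:R) 1 (fun h : R => c + h *: d) df -> df = d.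
Proof.
move=> H; rewrite -(@derive_val _ _ _ _ _ _ _ H).
have -> : (fun h : R => c + h *: d) = cst c + ( *:%R^~ d) by [].
rewrite deriveD; last 2 first.
- exact: derivable_cst.
- exact/diff_derivable.
rewrite derive_cst add0r deriveE // diff_val /= scale1r //.
Qed.


Lemma F_lin (R : realType) n m k ns (C : 'M[R]_n) St Mmu Mrho (P : 'M[R]_(n, k)) (Ys : 'M[R]_(n, ns))
  (dx ddx x : 'rV[R]_(k+m)) (di ddi i v dv : 'rV[R]_ns) (s t h : R) :
  TOmega_F C St Mmu Mrho P Ys (dx + h *: ddx) (di + h *: ddi) (x + h *: dx) (i + h *: di) (v + h *: dv) s
  = TOmega_F C St Mmu Mrho P Ys dx di x i v t + h *: TOmega_F C St Mmu Mrho P Ys ddx ddi dx di dv t.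
Proof.
rewrite /TOmega_F.
rewrite /=. rewrite !(linearD, linearZ) /=.
rewrite !scale_row_mx !add_row_mx.
congr (row_mx (row_mx _ _) _); apply/matrixP => p q; rewrite !mxE; ring.
Qed.


Lemma B_inj (R : realType) (n m k ns : nat)
  (C : 'M[R]_n) (St : 'M[R]_(m, n)) (Mrho : 'M[R]_n)
  (P : 'M[R]_(n, k)) (Ys : 'M[R]_(n, ns)) :
  (forall y : 'cV[R]_m, St^T *m y = 0 -> y = 0) ->
  C *m St^T = 0 ->
  P^T *m C^T *m Mrho *m C *m P \in unitmx ->
  (forall x : 'cV[R]_ns, x != 0 -> C *m Ys *m x != 0) ->
  (forall (x : 'cV[R]_ns) (y : 'cV[R]_k), x != 0 -> y != 0 ->
     C *m Ys *m x != C *m P *m y) ->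
  forall z : 'cV[R]_(k + m + ns), row_mx (row_mx P St^T) Ys *m z = 0 -> z = 0.
Proof.
move=> hS hCS hK h1 h2 z.
rewrite -[z](vsubmxK z) -[usubmx z](vsubmxK (usubmx z)) !mul_row_col.
set a := usubmx (usubmx z); set b := dsubmx (usubmx z); set c := dsubmx z.
move=> Bz.
have CB : C *m P *m a + C *m Ys *m c = 0.
  have := congr1 (mulmx C) Bz.
  by rewrite !mulmxDr !mulmxA hCS mul0mx addr0 mulmx0.
have c0 : c = 0.
  apply/eqP; apply: contraT => cn0.
  case: (eqVneq a 0) => [a0|an0].
    by move: CB; rewrite a0 mulmx0 add0r => /eqP; rewrite (negbTE (h1 c cn0)).
  have := h2 c (- a) cn0; rewrite oppr_eq0 an0 mulmxN => /(_ isT).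
  by move: CB => /eqP; rewrite addrC addr_eq0 => ->.
have a0 : a = 0.
  move: CB; rewrite c0 mulmx0 addr0 => CPa.
  have : P^T *m C^T *m Mrho *m C *m P *m a = 0.
    by rewrite -!mulmxA (mulmxA C) CPa !mulmx0.
  by move/(congr1 (mulmx (invmx (P^T *m C^T *m Mrho *m C *m P)))); rewrite mulKmx // mulmx0.
have b0 : b = 0.
  by apply: hS; move: Bz; rewrite a0 c0 !mulmx0 addr0 add0r.
by rewrite a0 b0 c0 !col_mx0.
Qed.


Lemma posdef_gram (R : realType) n p (M : 'M[R]_n) (B : 'M[R]_(n, p)) :
  posdefmx M -> (forall z : 'cV_p, B *m z = 0 -> z = 0) -> posdefmx (B^T *m M *m B).
Proof.
move=> hM hB x xn0.
have Bx : B *m x != 0 by apply: contra xn0 => /eqP /hB ->.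
by have := hM _ Bx; rewrite trmx_mul !mulmxA.
Qed.

Lemma trmx_neq0 {R : realType} {p q} {u : 'M[R]_(p, q)} : u != 0 -> u^T != 0.
Proof. by apply: contra => /eqP h; rewrite -[u]trmxK h trmx0. Qed.

Lemma posdef_unit {R : realType} {n} {A : 'M[R]_n} : posdefmx A -> A \in unitmx.
Proof.
move=> hA; rewrite -row_free_unit -kermx_eq0; apply/eqP/row_matrixP => i.
rewrite row0; apply/eqP; apply: contraT => hi.
have := hA _ (trmx_neq0 hi); rewrite trmxK -row_mul mulmx_ker row0 mul0mx mxE.
by rewrite ltxx.
Qed.

Lemma posdef_inv (R : realType) n (A : 'M[R]_n) : A^T = A -> posdefmx A -> posdefmx (invmx A).
Proof.
move=> hs hA x xn0; have uA := posdef_unit hA.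
set y := invmx A *m x.
have yn0 : y != 0.
  by apply: contra xn0 => /eqP y0; rewrite -(mulKVmx uA x) -/y y0 mulmx0.
have -> : x = A *m y by rewrite /y mulKVmx.
have h := hA _ yn0.
rewrite trmx_mul hs -!mulmxA mulKmx // mulmxA; exact h.
Qed.

Lemma quad_dr (R : realType) p q (A : 'M[R]_(p + q)) (x : 'cV[R]_q) :
  (col_mx 0 x)^T *m A *m col_mx 0 x = x^T *m drsubmx A *m x.
Proof.
rewrite -{1}[A]submxK tr_col_mx trmx0 mul_row_block.
rewrite (@mul0mx _ 1 p p) (@mul0mx _ 1 p q) !add0r mul_row_col.
by rewrite (@mulmx0 _ 1 p 1) add0r.
Qed.

Lemma posdef_dr (R : realType) p q (A : 'M[R]_(p + q)) : posdefmx A -> posdefmx (drsubmx A).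
Proof.
move=> hA x xn0.
have X : col_mx 0 x != 0 :> 'cV[R]_(p + q).
  by apply: contra xn0 => /eqP h; have := congr1 dsubmx h; rewrite col_mxKd linear0 => ->.
by have := hA _ X; rewrite quad_dr.
Qed.


Lemma d_id (R : realType) (V : normedModType R) (a : V) : 'd (fun j : V => j) a = id :> (V -> V).
Proof. by rewrite diff_val. Qed.

Lemma diff_id_able (R : realType) (V : normedModType R) (a : V) : differentiable (fun j : V => j) a.
Proof. by []. Qed.

Lemma lin1_id (R : realType) n : lin1_mx (id : 'rV[R]_n -> 'rV[R]_n) = 1%:M.
Proof. by apply/matrixP => i j; rewrite !mxE eqxx eq_sym. Qed.

Lemma lin1_mulmxr (R : realType) n p (A : 'M[R]_(n, p)) : lin1_mx (fun w : 'rV[R]_n => w *m A) = A.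
Proof. by apply/matrixP => i j; rewrite mxE -[('e_i *m A)](rowE i A) mxE. Qed.

Lemma mulmxr_cont (R : realType) n p (A : 'M[R]_(n, p)) : continuous (fun w : 'rV[R]_n => w *m A).
Proof.
have -> : (fun w : 'rV[R]_n => w *m A) = \sum_(j < n) (fun w : 'rV[R]_n => w 0 j *: row j A).
  by apply: boolp.funext => w; rewrite fct_sumE mulmx_sum_row.
move=> x; apply: (@big_ind _ (fun f : 'rV[R]_n -> 'rV[R]_p => {for x, continuous f})).
- exact: cst_continuous.
- by move=> f g hf hg; apply: continuousD.
- move=> j _; apply: continuousZr_tmp; exact: coord_continuous.
Qed.

Lemma diff_aff (R : realType) n p (A : 'M[R]_(n, p)) (c : 'rV[R]_p) (v : 'rV[R]_n) :
  differentiable (fun w : 'rV[R]_n => c + w *m A) v /\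
  'd (fun w : 'rV[R]_n => c + w *m A) v = (fun w => w *m A) :> (_ -> _).
Proof.
have -> : (fun w : 'rV[R]_n => c + w *m A) = cst c + mulmxr A by [].
have hc : continuous (mulmxr A : 'rV[R]_n -> 'rV[R]_p).
  move=> y; exact: (@mulmxr_cont R n p A y).
have d1 : differentiable (mulmxr A : 'rV[R]_n -> 'rV[R]_p) v.
  exact: (@linear_differentiable R _ _ (mulmxr A) v hc).
have d0 : differentiable (cst c : 'rV[R]_n -> 'rV[R]_p) v by exact: differentiable_cst.
have d2 := differentiableD d0 d1. split; first exact d2.
have e1 := diffD d0 d1.
have e2 := (@diff_lin R _ _ (mulmxr A) v hc).
have e3 := (@diff_cst R _ _ c v).
transitivity ('d (cst c) v \+ 'd (mulmxr A) v); first exact e1.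
apply: boolp.funext => w /=.
have h2 := congr1 (fun f : 'rV[R]_n -> 'rV[R]_p => f w) e2.
have h3 := congr1 (fun f : 'rV[R]_n -> 'rV[R]_p => f w) e3.
simpl in h2, h3.
exact (etrans (f_equal2 (fun a b => a + b) h3 h2) (add0r _)).
Qed.

Lemma row3_eq0 (R : realType) p q r (a : 'rV[R]_p) (b : 'rV[R]_q) (c : 'rV[R]_r) :
  row_mx (row_mx a b) c = 0 -> [/\ a = 0, b = 0 & c = 0].
Proof.
move=> h.
have hc := congr1 rsubmx h; rewrite row_mxKr linear0 in hc.
have hab := congr1 lsubmx h; rewrite row_mxKl linear0 in hab.
have ha := congr1 lsubmx hab; rewrite row_mxKl linear0 in ha.
have hb := congr1 rsubmx hab; rewrite row_mxKr linear0 in hb.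
by [].
Qed.

Lemma tr_eq0 (R : realType) p q (a : 'M[R]_(p, q)) : a^T = 0 -> a = 0.
Proof. by move/(congr1 trmx); rewrite trmxK trmx0. Qed.

Lemma dsub_mul_col0 (R : realType) p q (A : 'M[R]_(p + q)) (u : 'cV[R]_q) :
  dsubmx (A *m col_mx 0 u) = drsubmx A *m u.
Proof.
by rewrite -{1}[A]submxK mul_block_col (@mulmx0 _ q p 1) add0r col_mxKd.
Qed.

Theorem proposition6 (R : realType) (n m k ns : nat)
  (C : 'M[R]_n) (St : 'M[R]_(m, n)) (Mmu Mrho : 'M[R]_n)
  (P : 'M[R]_(n, k)) (Ys : 'M[R]_(n, ns)) (I : set R) :
  Mmu^T = Mmu -> posdefmx Mmu ->
  (forall y : 'cV[R]_m, St^T *m y = 0 -> y = 0) ->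
  C *m St^T = 0 ->
  (forall z : 'cV[R]_n, St *m z = 0 <-> exists w : 'cV[R]_n, z = C^T *m w) ->
  P^T *m C^T *m Mrho *m C *m P \in unitmx ->
  (forall x : 'cV[R]_ns, x != 0 -> C *m Ys *m x != 0) ->
  (forall (x : 'cV[R]_ns) (y : 'cV[R]_k), x != 0 -> y != 0 ->
     C *m Ys *m x != C *m P *m y) ->
  inductance_like I (TOmega_F C St Mmu Mrho P Ys).
Proof.
move=> hMs hM hS hCS _ hK h1 h2.
set K := P^T *m C^T *m Mrho *m C *m P.
set B : 'M[R]_(n, k + m + ns) := row_mx (row_mx P St^T) Ys.
have hB := @B_inj R n m k ns C St Mrho P Ys hS hCS hK h1 h2.
have NposB : posdefmx (B^T *m Mmu *m B) := @posdef_gram R _ _ _ _ hM hB.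
have Nsym : (B^T *m Mmu *m B)^T = B^T *m Mmu *m B.
  by rewrite !trmx_mul trmxK hMs mulmxA.
set N := B^T *m Mmu *m B in NposB Nsym.
have uN : N \in unitmx := posdef_unit NposB.
set N' := invmx N.
have hQ : posdefmx (drsubmx N') := @posdef_dr R _ _ _ (@posdef_inv R _ _ Nsym NposB).
pose rhs := fun (x : 'rV[R]_(k + m)) (w : 'rV[R]_ns) =>
  col_mx (col_mx (- (K *m (lsubmx x)^T)) (0 : 'cV[R]_m)) w^T : 'cV[R]_(k + m + ns).
exists (fun x i w t => (usubmx (N' *m rhs x w))^T), (fun i x t => i),
  (fun x i w t => (dsubmx (N' *m rhs x w))^T).
split.
- move=> i x t _; split.
  + exact: (@diff_id_able R).
  + exact: differentiable_cst.
  + exact: derivable_cst.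
- move=> x dx ddx i v di dv ddi t _ F0 dF.
  have E : (fun h : R => TOmega_F C St Mmu Mrho P Ys (dx + h *: ddx) (di + h *: ddi)
      (x + h *: dx) (i + h *: di) (v + h *: dv) (t + h)) =
    (fun h => TOmega_F C St Mmu Mrho P Ys dx di x i v t +
       h *: TOmega_F C St Mmu Mrho P Ys ddx ddi dx di dv t).
    by apply: boolp.funext => h; apply: F_lin.
  rewrite E in dF.
  have F1 := @aff_derive R _ _ _ _ dF.
  move: F0 => /row3_eq0 [/tr_eq0 e1 /tr_eq0 _ /tr_eq0 e3].
  move: (esym F1) => /row3_eq0 [_ /tr_eq0 e2 _].
  set w := P *m (lsubmx dx)^T + St^T *m (rsubmx dx)^T + Ys *m di^T in e1 e2 e3.
  have Bw : B *m col_mx dx^T di^T = w.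
    by rewrite /B -[dx in col_mx dx^T _]hsubmxK tr_row_mx !mul_row_col.
  have Ny : N *m col_mx dx^T di^T = rhs x v.
    rewrite /N -mulmxA Bw /B !tr_row_mx trmxK !mul_col_mx /rhs.
    congr (col_mx (col_mx _ _) _).
    - by move/eqP: e1; rewrite addrC addr_eq0 => /eqP.
    - exact: e2.
    - by apply/eqP; rewrite -subr_eq0; apply/eqP.
  have Hy : col_mx dx^T di^T = N' *m rhs x v by rewrite -Ny mulKmx.
  rewrite -Hy col_mxKu col_mxKd !trmxK; split => //.
  by rewrite /dphi_di /dphi_dx /dphi_dt d_id diff_cst derive_cst /= !addr0.
- move=> x i v0 t _ J G.
  have hJ : J = 1%:M by rewrite /J /dphi_di /= d_id lin1_id trmx1.
  set Q := drsubmx N'.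
  set c0 := (dsubmx (N' *m rhs x 0))^T.
  have hG : G = fun w => c0 + w *m Q^T.
    apply: boolp.funext => w /=; rewrite /G hJ invmx1 mul1mx /dphi_dx /dphi_dt diff_cst derive_cst /=.
    have -> : forall a, (0 : 'rV[R]_(k + m) -> 'rV[R]_ns) a = 0 by [].
    rewrite !trmx0 !oppr0 !add0r trmxK.
    have -> : rhs x w = rhs x 0 + col_mx 0 w^T.
      by rewrite /rhs add_col_mx trmx0 !addr0 add0r.
    by rewrite mulmxDr !linearD /= dsub_mul_col0 trmx_mul trmxK.
  have [dG ddG] := @diff_aff R ns ns Q^T c0 v0.
  split.
  + by rewrite hJ unitmx1.
  + rewrite hG; exact dG.
  + rewrite hG ddG lin1_mulmxr trmxK; exact hQ.
Qed.
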